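(* Let $(X,\Phi)$ be a semitopological Mal'tsev space and let $\mathcal C$ be an epireflective subcategory of $\mathbf{Top}$ closed under supertopologies. Then the reflection arrow $\mathrm{r}_{(X,\mathcal C)}\colon X\to\mathrm{r}_{\mathcal C}X$ is an open map.
   Context: A Mal'tsev operation on $X$ is a map $\Phi\colon X^3\to X$ with $\Phi(x,x,y)=\Phi(y,x,x)=y$ for all $x,y\in X$; a semitopological Mal'tsev space is a space with a separately continuous Mal'tsev operation. An epireflective subcategory $\mathcal C$ of $\mathbf{Top}$ is a full, isomorphism-closed subcategory closed under products and subspaces; each space $X$ has a reflection $\mathrm{r}_{\mathcal C}X\in\mathcal C$ with a continuous surjection $\mathrm{r}_{(X,\mathcal C)}\colon X\to\mathrm{r}_{\mathcal C}X$ through which every continuous map from $X$ into a space of $\mathcal C$ factors uniquely. $\mathcal C$ is closed under supertopologies if $(X,\tau)\in\mathcal C$ and $\rho\supseteq\tau$ a topology on $X$ imply $(X,\rho)\in\mathcal C$. *)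

(* Defs.v *)
Set Implicit Arguments.

(** A topology on [T]: a family of "open" subsets of [T] containing the whole
    set, closed under binary intersections and arbitrary unions (hence also
    containing the empty set, the empty union). *)
Definition is_topology (T : Type) (O : (T -> Prop) -> Prop) : Prop :=
  O (fun _ => True) /\
  (forall U V, O U -> O V -> O (fun x => U x /\ V x)) /\
  (forall F : (T -> Prop) -> Prop, (forall U, F U -> O U) ->
     O (fun x => exists U, F U /\ U x)).

Record space := Space {
  carrier :> Type;
  open : (carrier -> Prop) -> Prop;
  open_topology : is_topology open }.

Definition continuous {X Y : space} (f : X -> Y) : Prop :=
  forall V, open Y V -> open X (fun x => V (f x)).

Definition open_map {X Y : space} (f : X -> Y) : Prop :=
  forall U, open X U -> open Y (fun y => exists x, U x /\ f x = y).

Definition surjective (A B : Type) (f : A -> B) : Prop :=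
  forall y, exists x, f x = y.

Definition generated (T : Type) (B : (T -> Prop) -> Prop) : (T -> Prop) -> Prop :=
  fun U => forall O, is_topology O -> (forall S, B S -> O S) -> O U.

Lemma generated_topology (T : Type) (B : (T -> Prop) -> Prop) :
  is_topology (generated B).
Proof.
split; [|split].
- intros O [HT _] _; exact HT.
- intros U V HU HV O HO HB; destruct HO as [HT [HI HUn]].
  apply HI; [apply HU|apply HV]; repeat split; assumption.
- intros F HF O HO HB; destruct HO as [HT [HI HUn]].
  apply HUn; intros U HU; apply (HF U HU); repeat split; assumption.
Qed.

Definition prod_space {I : Type} (X : I -> space) : space :=
  @Space (forall i, X i)
    (generated (fun S => exists i (U : X i -> Prop), open (X i) U /\
                            forall f, S f <-> U (f i)))
    (generated_topology _).

Definition subspace {X : space} (A : X -> Prop) : space :=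
  @Space {x : X | A x}
    (generated (fun S => exists U, open X U /\ forall x, S x <-> U (proj1_sig x)))
    (generated_topology _).

Definition homeomorphic (X Y : space) : Prop :=
  exists (f : X -> Y) (g : Y -> X), continuous f /\ continuous g /\
    (forall x, g (f x) = x) /\ (forall y, f (g y) = y).

(** A (full) subcategory of Top is given by a class of spaces. It is
    epireflective when it is isomorphism-closed and closed under products
    and subspaces. *)
Definition epireflective (C : space -> Prop) : Prop :=
  (forall X Y, C X -> homeomorphic X Y -> C Y) /\
  (forall (I : Type) (X : I -> space), (forall i, C (X i)) -> C (prod_space X)) /\
  (forall (X : space) (A : X -> Prop), C X -> C (subspace A)).

Definition closed_under_supertopologies (C : space -> Prop) : Prop :=
  forall (X : space) (rho : (X -> Prop) -> Prop) (Hrho : is_topology rho),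
    C X -> (forall U, open X U -> rho U) -> C (@Space X rho Hrho).

Definition is_reflection (C : space -> Prop) (X Y : space) (r : X -> Y) : Prop :=
  C Y /\ continuous r /\ surjective r /\
  forall (Z : space) (f : X -> Z), C Z -> continuous f ->
    exists g : Y -> Z, (continuous g /\ forall x, g (r x) = f x) /\
      forall g' : Y -> Z, continuous g' -> (forall x, g' (r x) = f x) ->
        forall y, g' y = g y.

Definition maltsev (T : Type) (Phi : T -> T -> T -> T) : Prop :=
  forall x y, Phi x x y = y /\ Phi y x x = y.

Definition separately_continuous {X : space} (Phi : X -> X -> X -> X) : Prop :=
  (forall b c, continuous (fun a => Phi a b c)) /\
  (forall a c, continuous (fun b => Phi a b c)) /\
  (forall a b, continuous (fun c => Phi a b c)).

(* Main.v *)
Require Import Defs.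
From Stdlib Require Import FunctionalExtensionality PropExtensionality.

Lemma pred_ext (T : Type) (P Q : T -> Prop) : (forall x, P x <-> Q x) -> P = Q.
Proof.
intros H; apply functional_extensionality; intros x; apply propositional_extensionality; apply H.
Qed.

Theorem proposition4p8 (X : space) (Phi : X -> X -> X -> X)
  (HM : maltsev Phi) (Hsc : separately_continuous Phi)
  (C : space -> Prop) (HC : epireflective C)
  (Hsup : closed_under_supertopologies C)
  (Y : space) (r : X -> Y) (Hr : is_reflection C X Y r) :
  open_map r.
Proof.
destruct Hr as [HCY [Hrc [Hsurj Hfac]]].
destruct Hsc as [H1 [_ H3]].
assert (Hcomp : forall t s u, r u = r s -> r (Phi t s u) = r t).
{ intros t s u Hus.
  destruct (Hfac Y (fun c => r (Phi t s c)) HCY) as [g [[_ Hg] _]].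
  { intros V HV. exact (H3 t s (fun z => V (r z)) (Hrc V HV)). }
  rewrite <- (Hg u), Hus, Hg. f_equal. apply (proj2 (HM s t)). }
assert (Hpre : forall U, open X U -> open X (fun x => exists x', U x' /\ r x' = r x)).
{ intros U HU.
  set (W := fun x => exists x', U x' /\ r x' = r x).
  assert (E : W = fun x => exists V, (open X V /\ forall z, V z -> W z) /\ V x).
  { apply pred_ext; intros x; split.
    - intros [u [Hu Hux]].
      exists (fun t => U (Phi t x u)); split; [split|].
      + exact (H1 x u U HU).
      + intros z Hz. exists (Phi z x u); split; [exact Hz|]. apply Hcomp. exact Hux.
      + simpl. rewrite (proj1 (HM x u)). exact Hu.
    - intros [V [[_ HV] Vx]]. exact (HV x Vx). }
  rewrite E. destruct (open_topology X) as [_ [_ HUn]].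
  apply HUn. intros V [HV _]; exact HV. }
intros U HU.
set (B := fun S : Y -> Prop => open Y S \/
   exists U, open X U /\ forall y, S y <-> exists x, U x /\ r x = y).
set (Y' := @Space (carrier Y) (generated B) (generated_topology B)).
assert (HCY' : C Y').
{ apply Hsup; [exact HCY|]. intros V HV O _ HB. apply HB. left. exact HV. }
destruct (Hfac Y' r HCY') as [g [[Hgc Hg] _]].
{ intros V HV. simpl in HV.
  apply (HV (fun V => open X (fun x => V (r x)))).
  - destruct (open_topology X) as [HT [HI HUn]]. split; [exact HT|split].
    + intros A A' HA HA'. exact (HI _ _ HA HA').
    + intros F HF.
      replace (fun x => exists U0, F U0 /\ U0 (r x)) with
        (fun x => exists W, (exists A, F A /\ W = fun x => A (r x)) /\ W x).
      * apply HUn. intros W [A [HA ->]]. exact (HF A HA).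
      * apply pred_ext; intros x; split.
        -- intros [W [[A [HA ->]] HW]]. exists A; tauto.
        -- intros [A [HA HAx]]. exists (fun x => A (r x)). split; [exists A; tauto|exact HAx].
  - intros S [HS | [U' [HU' HS]]].
    + exact (Hrc S HS).
    + replace (fun x => S (r x)) with (fun x => exists x', U' x' /\ r x' = r x).
      * exact (Hpre U' HU').
      * apply pred_ext; intros x. rewrite HS. tauto. }
assert (Hid : forall y, g y = y).
{ intros y. destruct (Hsurj y) as [x <-]. apply Hg. }
set (I := fun y => exists x, U x /\ r x = y).
assert (HI' : open Y' I).
{ simpl. intros O _ HB. apply HB. right. exists U. split; [exact HU|]. intros y; tauto. }
pose proof (Hgc I HI') as H.
replace (fun y => I (g y)) with I in H; [exact H|].
apply pred_ext; intros y. rewrite Hid. tauto.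
Qed.
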